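(* For $T\in D(\nu)$, let $S_T$ be the set of all $\lambda_1\in\mathcal P$ such that $T\in\underline{\mathrm{CLR}}^{\lambda(\lambda_1)}_{\alpha(\lambda_1),\nu}$. Then $S_T=\lambda_{\min}(T)+\mathcal P=\{\lambda_{\min}(T)+\delta:\delta\in\mathcal P\}$.
   Context: Identify a partition $\lambda=(a_1\ge a_2\ge\cdots)$ with $\sum_ja_j\epsilon_j$ in $\Lambda=\bigoplus_{j\ge1}\mathbb Z\epsilon_j$; put $\omega_i=\epsilon_1+\dots+\epsilon_i$; partitions are exactly elements with all $\omega$-coordinates $\ge0$, and addition of partitions is addition in $\Lambda$. For $x,y\in\Lambda$, $y\le x$ means $x-y$ has all $\omega$-coordinates $\ge0$. $\mathcal P$ = partitions, $\mathcal P^k$ = $k$-tuples. $SST(\nu)$ = semistandard tableaux of shape $\nu$ with entries in $\mathbb Z_{>0}$, with the standard $\mathfrak{gl}_\infty$-crystal structure. For $T\in SST(\nu)$: $\mathrm{wt}(T)=\sum_j(\#\text{entries }j)\epsilon_j$, $\varepsilon_i(T)=\max\{m\ge0:\tilde e_i^mT\ne0\}$, $\varepsilon(T)=\sum_i\varepsilon_i(T)\omega_i$. $\mathrm{CLR}^\lambda_{\alpha,\nu}=\{T\in SST(\nu):\varepsilon(T)\le\alpha,\ \alpha+\mathrm{wt}(T)=\lambda\}$. Fix $k\ge1$, partitions $\nu=(\nu_1^+,\nu_1^-,\dots,\nu_k^+,\nu_k^-)$; indices cyclic mod $k$ ($\lambda_0:=\lambda_k$). $\underline{SST}(\nu)=\prod_iSST(\nu_i^+)\times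 SST(\nu_i^-)$, $T=(T_1^+,T_1^-,\dots,T_k^+,T_k^-)$, $\mathrm{wt}(T_i)=\mathrm{wt}(T_i^+)-\mathrm{wt}(T_i^-)$. $\underline{\mathrm{CLR}}^\lambda_{\alpha,\nu}=\prod_{i=1}^k\mathrm{CLR}^{\lambda_i}_{\alpha_i,\nu_i^+}\times\mathrm{CLR}^{\lambda_{i-1}}_{\alpha_i,\nu_i^-}$. $D(\nu)$ = set of $T$ lying in some $\underline{\mathrm{CLR}}^\lambda_{\alpha,\nu}$ with $\lambda,\alpha\in\mathcal P^k$. For $\lambda_1\in\mathcal P$: $\lambda(\lambda_1)=(\lambda_i)_i$ with $\lambda_i=\lambda_1+\sum_{j=2}^i\mathrm{wt}(T_j)$, $\alpha(\lambda_1)=(\alpha_i)_i$ with $\alpha_i=\lambda_1-\mathrm{wt}(T_i^+)+\sum_{j=2}^i\mathrm{wt}(T_j)$. $\lambda_{\min}(T)$ is the coordinatewise (in $\omega$-coordinates) maximum of $S_i^\pm=\varepsilon(T_i^\pm)+\mathrm{wt}(T_i^+)-\sum_{j=2}^i\mathrm{wt}(T_j)$, $i=1,\dots,k$; it is a partition. *)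

(* Defs.v *)
From mathcomp Require Import all_boot all_order all_algebra.
Set Implicit Arguments. Unset Strict Implicit. Unset Printing Implicit Defensive.
Import Order.TTheory GRing.Theory Num.Theory.
Local Open Scope ring_scope.

(* CONVENTION (0-based): x : wt represents sum_j (x j) eps_{j+1}; only
   finitely supported x are elements of Lambda (see [finsupp]).           *)
Definition wt := nat -> int.

Definition finsupp (x : wt) : Prop := exists N : nat, forall j, (N <= j)%N -> x j = 0.

Definition addw (x y : wt) : wt := fun j => x j + y j.
Definition subw (x y : wt) : wt := fun j => x j - y j.

(* omega-coordinate of x at omega_{i+1} = eps_1 + ... + eps_{i+1}:
   x = sum_i c_i omega_{i+1}  with  c_i = x_i - x_{i+1}. *)
Definition omega_coord (x : wt) (i : nat) : int := x i - x i.+1.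

(* element of Lambda with given omega-coordinates c, all of which vanish
   from index N on: sum_{i<N} c_i omega_{i+1}. *)
Definition from_omega (c : nat -> int) (N : nat) : wt :=
  fun j => \sum_(j <= i < N) c i.

Definition is_partition (x : wt) : Prop :=
  finsupp x /\ forall i, 0 <= omega_coord x i.

Definition wle (y x : wt) : Prop := forall i, 0 <= omega_coord (subw x y) i.

(* A tableau is the list of its rows (top row first), each row listed left
   to right.  CONVENTION (0-based letters): the nat entry v stands for the
   positive integer v+1.  Rows are nonempty (so the representation is
   unique). *)
Definition tab := seq (seq nat).

Definition is_SST (nu : wt) (t : tab) : Prop :=
  [/\ all (fun row => row != [::]) t,
      forall r, (size (nth [::] t r))%:Z = nu r,
      forall r, sorted leq (nth [::] t r) &
      forall r c, (c < size (nth [::] t r.+1))%N ->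
        (nth 0%N (nth [::] t r) c < nth 0%N (nth [::] t r.+1) c)%N].

Definition read (t : tab) : seq nat := flatten (rev t).

Definition wtT (t : tab) : wt := fun j => (count_mem j (read t))%:Z.

(* Signature rule on words: letter i.+1 (i.e. i+2) is an opening bracket,
   letter i (i.e. i+1) a closing one; [unm] returns the stack (top first)
   of the positions of the unmatched letters i.+1. *)
Fixpoint unm (i : nat) (w : seq nat) (k : nat) (st : seq nat) : seq nat :=
  match w with
  | [::] => st
  | x :: w' =>
      if x == i.+1 then unm i w' k.+1 (k :: st)
      else if x == i then unm i w' k.+1 (behead st)
      else unm i w' k.+1 st
  end.

(* Kashiwara operator e_i on words: change the leftmost unmatched i.+1
   into i; None (= 0) if there is none. *)
Definition e_word (i : nat) (w : seq nat) : option (seq nat) :=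
  match unm i w 0 [::] with
  | [::] => None
  | p :: s => Some (set_nth 0%N w (last p s) i)
  end.

Definition eT (i : nat) (t : tab) : option tab :=
  omap (fun w => rev (reshape (map size (rev t)) w)) (e_word i (read t)).

Definition eT_iter (i m : nat) (t : tab) : option tab :=
  iter m (fun o => obind (eT i) o) (Some t).

(* eps_i(T) = max { m >= 0 : e_i^m T <> 0 }  (each application of e_i
   lowers the number of letters i.+1, which bounds m). *)
Definition eps_i (i : nat) (t : tab) : nat :=
  \max_(m < (count_mem i.+1 (read t)).+1 | eT_iter i m t != None) m.

Definition maxletter (t : tab) : nat := \max_(x <- read t) x.

(* eps(T) = sum_i eps_i(T) omega_i  (eps_i vanishes beyond the letters) *)
Definition epsT (t : tab) : wt :=
  from_omega (fun i => (eps_i i t)%:Z) (maxletter t).+1.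

Definition CLR (lam alp nu : wt) (t : tab) : Prop :=
  [/\ is_SST nu t, wle (epsT t) alp & forall j, alp j + wtT t j = lam j].

(* Families of k objects are functions on nat used on 1..k. *)
Definition prevk (k i : nat) : nat := if i == 1%N then k else i.-1.

Section Tuples.
Variables (k : nat) (nup num : nat -> wt) (Tp Tm : nat -> tab).

Definition uCLR (lam alp : nat -> wt) : Prop :=
  forall i, (1 <= i <= k)%N ->
    CLR (lam i) (alp i) (nup i) (Tp i) /\ CLR (lam (prevk k i)) (alp i) (num i) (Tm i).

Definition inD : Prop :=
  exists lam alp : nat -> wt,
    (forall i, (1 <= i <= k)%N -> is_partition (lam i) /\ is_partition (alp i))
    /\ uCLR lam alp.

Definition wtTi (i : nat) : wt := subw (wtT (Tp i)) (wtT (Tm i)).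

Definition sumwt (i : nat) : wt := fun j => \sum_(2 <= j' < i.+1) wtTi j' j.

Definition lamOf (l1 : wt) : nat -> wt := fun i => addw l1 (sumwt i).
Definition alpOf (l1 : wt) : nat -> wt :=
  fun i => addw (subw l1 (wtT (Tp i))) (sumwt i).

Definition Sp (i : nat) : wt := subw (addw (epsT (Tp i)) (wtT (Tp i))) (sumwt i).
Definition Sm (i : nat) : wt := subw (addw (epsT (Tm i)) (wtT (Tp i))) (sumwt i).

(* bound beyond which all the above vectors vanish *)
Definition Nbound : nat :=
  (\max_(1 <= i < k.+1) maxn (maxletter (Tp i)) (maxletter (Tm i))).+1.

Definition lam_min : wt :=
  from_omega (fun c => \big[Num.max/omega_coord (Sp 1) c]_(1 <= i < k.+1)
                         Num.max (omega_coord (Sp i) c) (omega_coord (Sm i) c))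
             Nbound.
End Tuples.

(* Main.v *)
Require Import Defs.
From mathcomp Require Import all_boot all_order all_algebra zify.
Set Implicit Arguments. Unset Strict Implicit. Unset Printing Implicit Defensive.

Lemma unm_cat i a b k st :
  unm i (a ++ b) k st = unm i b (k + size a) (unm i a k st).
Proof.
elim: a k st => [|x a IH] k st /=; first by rewrite addn0.
by case: ifP => _; [|case: ifP => _]; rewrite IH addSnnS.
Qed.

Lemma unm_range i w k st x :
  x \in unm i w k st -> x \in st \/ (k <= x < k + size w).
Proof.
elim: w k st => [|y w IH] k st /=; first by left.
have H2 : forall st', (x \in st' -> x \in st \/ (k <= x < k + (size w).+1)) ->
    x \in unm i w k.+1 st' -> x \in st \/ (k <= x < k + (size w).+1).
  move=> st' Hst /IH [/Hst //|/andP [h1 h2]]; right; apply/andP; split; lia.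
case: ifP => _; [|case: ifP => _]; apply: H2.
- rewrite inE => /orP [/eqP->|]; [right; apply/andP; split; lia|by left].
- by move/mem_behead; left.
- by left.
Qed.

Lemma unm_split i w k top st :
  exists d, unm i w k (top ++ st) = unm i w k top ++ drop d st.
Proof.
elim: w k top st => [|y w IH] k top st /=; first by exists 0; rewrite drop0.
case: ifP => _; [|case: ifP => _].
- exact: (IH k.+1 (k :: top) st).
- case: top => [|z top] /=.
  + have [d ->] := IH k.+1 [::] (behead st).
    by exists d.+1; rewrite -drop1 drop_drop addn1.
  + exact: IH.
- exact: IH.
Qed.

Lemma unm_size_le i w k st : size (unm i w k st) <= size st + count_mem i.+1 w.
Proof.
elim: w k st => [|y w IH] k st /=; first by rewrite addn0.
have := IH k.+1 (k :: st); have := IH k.+1 (behead st); have := IH k.+1 st.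
have : size (behead st) <= size st by case: st => //= *; lia.
case E1: (y == i.+1); [|case E2: (y == i)]; rewrite /= ?eqxx /= ?E1 ?E2; lia.
Qed.

Lemma unm_count i w k st :
  count_mem i.+1 w + size st <= size (unm i w k st) + count_mem i w.
Proof.
elim: w k st => [|y w IH] k st /=; first by rewrite addn0.
have := IH k.+1 (k :: st); have := IH k.+1 (behead st); have := IH k.+1 st.
have : (size st).-1 <= size (behead st) by case: st => //= *; lia.
have ne : (i == i.+1) = false by apply/negbTE; rewrite neq_ltn ltnSn.
have ne' : (i.+1 == i) = false by apply/negbTE; rewrite neq_ltn ltnSn orbT.
case E1: (y == i.+1); [move/eqP: (E1) => ?; subst y|case E2: (y == i); [move/eqP: (E2) => ?; subst y|]]; rewrite /= ?eqxx ?ne ?ne' /= ?E1 ?E2; try lia.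
Qed.

Lemma set_nth_cat0 (a b : seq nat) x y :
  set_nth 0 (a ++ x :: b) (size a) y = a ++ y :: b.
Proof. by elim: a => //= z a ->. Qed.

Lemma last_eq (p q : nat) s N S : p :: s = N ++ q :: S -> last p s = last q S.
Proof.
case: N => [|n N] /= [-> ->] //.
by rewrite last_cat /=.
Qed.

Lemma eword_step i w : 0 < size (unm i w 0 [::]) ->
  exists w', e_word i w = Some w' /\ size w' = size w /\
    size (unm i w' 0 [::]) = (size (unm i w 0 [::])).-1.
Proof.
rewrite /e_word; case E: (unm i w 0 [::]) => [|p s] // _.
set q := last p s.
have qin : q \in unm i w 0 [::] by rewrite E mem_last.
have qlt : q < size w by case: (unm_range qin) => //= /andP [].
set a := take q w; set x := nth 0 w q; set b := drop q.+1 w.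
have Ew : w = a ++ x :: b by rewrite /a /x /b -drop_nth // cat_take_drop.
have sa : size a = q by rewrite /a size_take qlt.
have SltQ : forall z, z \in unm i a 0 [::] -> z < q.
  by move=> z /unm_range [//|/andP [_]]; rewrite sa.
have NgtQ : forall z, z \in unm i b q.+1 [::] -> q < z.
  by move=> z /unm_range [//|/andP [h _]].
have Eres : unm i w 0 [::] = unm i b q.+1 (unm i [:: x] q (unm i a 0 [::])).
  by rewrite {1}Ew -cat1s catA !unm_cat size_cat add0n sa addn1.
set S := unm i a 0 [::] in SltQ Eres.
set st0 := unm i [:: x] q S in Eres.
have [d Ed] := unm_split i b q.+1 [::] st0.
rewrite cat0s in Ed; rewrite Ed in Eres.
have qN : q \notin unm i b q.+1 [::] by apply/negP => /NgtQ; rewrite ltnn.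
have qd : q \in drop d st0.
  by move: qin; rewrite Eres mem_cat (negbTE qN).
have qst0 := mem_drop qd.
have Ex : x = i.+1.
  move: qst0; rewrite /st0 /=; case: ifP => [/eqP //|_].
  by case: ifP => _ => [/mem_behead|] /SltQ; rewrite ltnn.
rewrite /st0 Ex /= eqxx in qd Eres.
clear Ed; case: d qd Eres => [|d] qd Eres; last first.
  by move: qd => /= /mem_drop /SltQ; rewrite ltnn.
rewrite drop0 in Eres.
have Es : S = [::].
  move: Eres SltQ; case ES: S => [//|y S'] Eres SltQ; exfalso.
  have := last_eq (etrans (esym E) Eres); rewrite -/q /= => Hq.
  have : last y S' \in y :: S' by rewrite mem_last.
  by rewrite -Hq => /SltQ; rewrite ltnn.
exists (set_nth 0 w q i); split => //; split.
  by rewrite size_set_nth; apply/maxn_idPr.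
rewrite Ew -sa set_nth_cat0 unm_cat add0n -/S Es /= sa.
rewrite (_ : (i == i.+1) = false) ?eqxx; last by apply/negbTE; rewrite neq_ltn ltnSn.
move: (congr1 size (etrans (esym E) Eres)); rewrite Es size_cat /=; lia.
Qed.

Lemma eT_step i t : 0 < size (unm i (read t) 0 [::]) ->
  exists t', eT i t = Some t' /\
    size (unm i (read t') 0 [::]) = (size (unm i (read t) 0 [::])).-1.
Proof.
move=> /eword_step [w' [Ew [Sw Su]]].
exists (rev (reshape (map size (rev t)) w')); rewrite /eT Ew /=; split => //.
rewrite /read revK reshapeKr // Sw /read size_flatten //.
Qed.

Lemma eT_iter_ok i m t : m <= size (unm i (read t) 0 [::]) -> eT_iter i m t != None.
Proof.
elim: m t => [|m IH] t Hm; first by [].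
have [t' [Et Su]] := eT_step (leq_trans (ltn0Sn m) Hm).
rewrite /eT_iter iterSr /= Et; apply: IH; rewrite Su; lia.
Qed.

Lemma eps_ge i t : size (unm i (read t) 0 [::]) <= eps_i i t.
Proof.
have H := unm_size_le i (read t) 0 [::]; rewrite /= add0n in H.
have Hlt : size (unm i (read t) 0 [::]) < (count_mem i.+1 (read t)).+1 by rewrite ltnS.
rewrite /eps_i; apply: (@leq_bigmax_cond _ _ (fun m : 'I_ _ => nat_of_ord m) (Ordinal Hlt)).
exact: eT_iter_ok.
Qed.

Lemma phi_ge i t : count_mem i.+1 (read t) <= eps_i i t + count_mem i (read t).
Proof.
have := unm_count i (read t) 0 [::]; have := eps_ge i t; rewrite /= addn0; lia.
Qed.

Import Order.TTheory GRing.Theory Num.Theory.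
Local Open Scope ring_scope.

Lemma bigmax_ub (r : seq nat) (F : nat -> int) x0 B : x0 <= B ->
  (forall i, i \in r -> F i <= B) -> \big[Num.max/x0]_(i <- r) F i <= B.
Proof.
elim: r => [|a r IH] H1 H2; first by rewrite big_nil.
rewrite big_cons ge_max H2 ?mem_head //=; apply: IH => // i hi; apply: H2.
by rewrite inE hi orbT.
Qed.

Lemma bigmax_lb0 (r : seq nat) (F : nat -> int) x0 : x0 <= \big[Num.max/x0]_(i <- r) F i.
Proof. by elim: r => [|a r IH]; rewrite ?big_nil ?big_cons // le_max IH orbT. Qed.

Lemma bigmax_lb (r : seq nat) (F : nat -> int) x0 i : i \in r ->
  F i <= \big[Num.max/x0]_(i <- r) F i.
Proof.
elim: r => [|a r IH] //; rewrite inE big_cons le_max => /orP [/eqP->|/IH ->].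
  by rewrite lexx.
by rewrite orbT.
Qed.

Lemma omega_from f N j :
  omega_coord (from_omega f N) j = if (j < N)%N then f j else 0.
Proof.
rewrite /omega_coord /from_omega; case: ltnP => h.
  by rewrite big_ltn // addrK.
by rewrite !big_geq ?subrr // ltnW.
Qed.

Lemma from_omega0 f N j : (N <= j)%N -> from_omega f N j = 0.
Proof. by move=> h; rewrite /from_omega big_geq. Qed.

Lemma wtT0 t j : (maxletter t < j)%N -> wtT t j = 0.
Proof.
move=> h; rewrite /wtT; apply/eqP; rewrite eqz_nat; apply/eqP/count_memPn.
apply/negP => hj; move: (@leq_bigmax_seq _ (read t) xpredT (fun x => x) j hj isT).
rewrite -/(maxletter t) => h2; move: (leq_trans h h2); by rewrite ltnn.
Qed.

Lemma phi_omega t c : 0 <= omega_coord (epsT t) c + omega_coord (wtT t) c.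
Proof.
rewrite /epsT omega_from; case: ltnP => h.
  rewrite /omega_coord /wtT; have := phi_ge c t; lia.
rewrite add0r /omega_coord (wtT0 (j := c.+1)) ?subr0 // /wtT; lia.
Qed.

Lemma sumwt1 (Tp Tm : nat -> tab) j : sumwt Tp Tm 1 j = 0.
Proof. by rewrite /sumwt big_geq. Qed.

Lemma sumwtS (Tp Tm : nat -> tab) n j : (2 <= n)%N ->
  sumwt Tp Tm n j = sumwt Tp Tm n.-1 j + wtTi Tp Tm n j.
Proof.
case: n => [|n] // h; rewrite /sumwt big_nat_recr //=.
Qed.

Lemma sumwt0 k (Tp Tm : nat -> tab) i c :
  (forall j, (1 <= j <= k)%N -> wtT (Tp j) c = 0 /\ wtT (Tm j) c = 0) ->
  (i <= k)%N -> sumwt Tp Tm i c = 0.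
Proof.
move=> H hi; rewrite /sumwt big1_seq // => j /andP [_]; rewrite mem_index_iota => hj.
have [h1 h2] := H j ltac:(apply/andP; split; lia).
by rewrite /wtTi /subw h1 h2 subr0.
Qed.

Lemma cycle_sum k (Tp Tm : nat -> tab) (lam alp : nat -> wt) (nup num : nat -> wt) :
  (1 <= k)%N -> uCLR k nup num Tp Tm lam alp ->
  forall j, sumwt Tp Tm k j + wtTi Tp Tm 1 j = 0.
Proof.
move=> hk HU j.
have Hw : forall i, (1 <= i <= k)%N -> wtTi Tp Tm i j = lam i j - lam (prevk k i) j.
  move=> i hi; have [[_ _ e1] [_ _ e2]] := HU i hi.
  rewrite /wtTi /subw -(e1 j) -(e2 j); lia.
have Hs : forall n, (1 <= n <= k)%N -> sumwt Tp Tm n j = lam n j - lam 1%N j.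
  elim=> [|n IH] // hn.
  case: n IH hn => [|n] IH hn; first by rewrite sumwt1 subrr.
  rewrite sumwtS //= IH; last lia.
  rewrite Hw // /prevk /=; lia.
rewrite Hs ?hk ?leqnn // Hw ?leqnn ?hk // /prevk /=; lia.
Qed.

Theorem mainTheorem10 (k : nat) (nup num : nat -> wt) (Tp Tm : nat -> tab) :
  (1 <= k)%N ->
  (forall i, (1 <= i <= k)%N -> is_partition (nup i) /\ is_partition (num i)) ->
  inD k nup num Tp Tm ->
  forall l1 : wt,
    (is_partition l1 /\
     uCLR k nup num Tp Tm (lamOf Tp Tm l1) (alpOf Tp Tm l1))
    <->
    (exists delta : wt, is_partition delta /\
       forall j, l1 j = lam_min k Tp Tm j + delta j).
Proof.
move=> hk hnu hD l1.
set Nb := Nbound k Tp Tm.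
have hNb : forall i, (1 <= i <= k)%N ->
    (maxletter (Tp i) < Nb)%N /\ (maxletter (Tm i) < Nb)%N.
  move=> i hi.
  have := @leq_bigmax_seq _ (index_iota 1 k.+1) xpredT
    (fun i => maxn (maxletter (Tp i)) (maxletter (Tm i))) i
    ltac:(rewrite mem_index_iota; lia) isT.
  move=> h; rewrite /Nb /Nbound !ltnS; split; (apply: leq_trans h); by rewrite ?leq_maxl ?leq_maxr.
have hwt0 : forall c, (Nb <= c)%N -> forall j, (1 <= j <= k)%N ->
    wtT (Tp j) c = 0 /\ wtT (Tm j) c = 0.
  move=> c hc j hj; have [h1 h2] := hNb j hj; split; apply: wtT0; lia.
have hSpm0 : forall c, (Nb <= c)%N -> forall i, (1 <= i <= k)%N ->
    omega_coord (Sp Tp Tm i) c = 0 /\ omega_coord (Sm Tp Tm i) c = 0.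
  move=> c hc i hi; have [h1 h2] := hNb i hi.
  have e1 : forall d, (c <= d)%N -> epsT (Tp i) d = 0.
    by move=> d hd; apply: from_omega0; lia.
  have e2 : forall d, (c <= d)%N -> epsT (Tm i) d = 0.
    by move=> d hd; apply: from_omega0; lia.
  have s1 : sumwt Tp Tm i c = 0 by apply: (sumwt0 (hwt0 c hc)); lia.
  have s2 : sumwt Tp Tm i c.+1 = 0 by apply: (sumwt0 (hwt0 c.+1 _)); lia.
  have [w1 _] := hwt0 c hc i hi.
  have [w2 _] := hwt0 c.+1 (leq_trans hc (leqnSn c)) i hi.
  rewrite /omega_coord /Sp /Sm /subw /addw (e1 c) // (e1 c.+1) // (e2 c) //.
  rewrite (e2 c.+1) // s1 s2 w1 w2; split; lia.
set M := fun c => \big[Num.max/omega_coord (Sp Tp Tm 1) c]_(1 <= i < k.+1)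
   Num.max (omega_coord (Sp Tp Tm i) c) (omega_coord (Sm Tp Tm i) c).
have hlm : forall c, omega_coord (lam_min k Tp Tm) c = if (c < Nb)%N then M c else 0.
  by move=> c; rewrite /lam_min omega_from.
have hlm0 : forall j, (Nb <= j)%N -> lam_min k Tp Tm j = 0.
  by move=> j; apply: from_omega0.
have hM : forall c i, (1 <= i <= k)%N ->
    omega_coord (Sp Tp Tm i) c <= M c /\ omega_coord (Sm Tp Tm i) c <= M c.
  move=> c i hi.
  have := @bigmax_lb (index_iota 1 k.+1)
    (fun i => Num.max (omega_coord (Sp Tp Tm i) c) (omega_coord (Sm Tp Tm i) c))
    (omega_coord (Sp Tp Tm 1) c) i ltac:(rewrite mem_index_iota; lia).
  by rewrite ge_max => /andP.
have hMub : forall c B, omega_coord (Sp Tp Tm 1) c <= B ->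
    (forall i, (1 <= i <= k)%N ->
       omega_coord (Sp Tp Tm i) c <= B /\ omega_coord (Sm Tp Tm i) c <= B) ->
    M c <= B.
  move=> c B h1 h2; apply: bigmax_ub => // i; rewrite mem_index_iota => hi.
  by have [a b] := h2 i hi; rewrite ge_max a b.
have hM0 : forall c, 0 <= M c.
  move=> c; apply: le_trans (bigmax_lb0 _ _ _).
  have := phi_omega (Tp 1%N) c.
  rewrite /omega_coord /Sp /subw /addw !sumwt1; lia.
have [lam [alp [_ HU]]] := hD.
have cyc := cycle_sum hk HU.
split.
- case => [[[N1 hN1] hl1] HU'].
  have hb : forall c i, (1 <= i <= k)%N ->
      omega_coord (Sp Tp Tm i) c <= omega_coord l1 c /\
      omega_coord (Sm Tp Tm i) c <= omega_coord l1 c.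
    move=> c i hi; have [[_ w1 _] [_ w2 _]] := HU' i hi; move: (w1 c) (w2 c).
    rewrite /omega_coord /subw /alpOf /Sp /Sm /addw /subw; split; lia.
  exists (fun j => l1 j - lam_min k Tp Tm j); split; last by move=> j; rewrite addrC subrK.
  split.
    exists (maxn N1 Nb) => j hj; rewrite hN1 ?hlm0 ?subrr //; lia.
  move=> c; have e := hlm c; rewrite /omega_coord in e *.
  case: ltnP e => hc e.
    have := hMub c (l1 c - l1 c.+1) (hb c 1%N ltac:(lia)).1 (fun i hi => hb c i hi).
    lia.
  have := hl1 c; rewrite /omega_coord; lia.
- case => delta [[[N2 hN2] hd] Heq].
  have hl1 : forall c, omega_coord (lam_min k Tp Tm) c <= omega_coord l1 c.
    by move=> c; have := hd c; rewrite /omega_coord !Heq; lia.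
  have hlmpos : forall c, 0 <= omega_coord (lam_min k Tp Tm) c.
    by move=> c; rewrite hlm; case: ifP => // _; exact: hM0.
  split.
    split; first by exists (maxn N2 Nb) => j hj; rewrite Heq hN2 ?hlm0 ?addr0 //; lia.
    by move=> c; exact: le_trans (hlmpos c) (hl1 c).
  move=> i hi; have [[s1 _ _] [s2 _ _]] := HU i hi.
  have hb : forall c, omega_coord (Sp Tp Tm i) c <= omega_coord l1 c /\
      omega_coord (Sm Tp Tm i) c <= omega_coord l1 c.
    move=> c; case: (ltnP c Nb) => hc.
      have [h1 h2] := hM c i hi; have := hl1 c; rewrite hlm hc => h3.
      by split; [exact: le_trans h1 h3|exact: le_trans h2 h3].
    have [h1 h2] := hSpm0 c hc i hi; rewrite h1 h2.
    by split; exact: le_trans (hlmpos c) (hl1 c).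
  split; split => //.
  + move=> c; have [h _] := hb c; move: h.
    rewrite /omega_coord /subw /alpOf /Sp /addw /subw; lia.
  + move=> j; rewrite /alpOf /lamOf /addw /subw; lia.
  + move=> c; have [_ h] := hb c; move: h.
    rewrite /omega_coord /subw /alpOf /Sm /addw /subw; lia.
  + move=> j; rewrite /alpOf /lamOf /addw /subw /prevk; case: eqP => [->|hne].
      by have := cyc j; rewrite sumwt1 /wtTi /subw; lia.
    rewrite (@sumwtS Tp Tm i); last lia.
    rewrite /wtTi /subw; lia.
Qed.
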